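(* Let $X$ be a geodesic metric space and let $\ell_1,\ell_2$ be two $N$-Morse geodesics in $X$ with $\ell_1(0)=\ell_2(0)=e$. Suppose there exists some $t_0$ such that $d(\ell_1(t),\ell_2(t))>4N(3,0)$ for all $t\ge t_0$, and fix such a $t_0$ with $d(\ell_1(t_0),\ell_2(t_0))\le 6N(3,0)$. Let $t_1,t_2\ge t_0$ (in the domains of $\ell_1,\ell_2$ respectively), and set $x_i=\ell_i(t_0)$, $y_i=\ell_i(t_i)$. Let $P$ be the path obtained by following $\ell_1$ from $y_1$ to $x_1$, then any geodesic from $x_1$ to $x_2$, then $\ell_2$ from $x_2$ to $y_2$. Then $P$ is a $(1,12N(3,0))$-quasi-geodesic. In particular \[d(y_1,y_2)\ge d(y_1,x_1)+d(x_1,x_2)+d(x_2,y_2)-12N(3,0).\]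
   Context: A Morse gauge is a function $N$ assigning to each $(K,C)$ ($K\ge1,C\ge0$) a number $N(K,C)\ge0$; a geodesic $\gamma$ is $N$-Morse if every $(K,C)$-quasi-geodesic with endpoints on $\gamma$ lies in the $N(K,C)$-neighbourhood of $\gamma$. A $(K,C)$-quasi-geodesic is a path $f$ with $K^{-1}|s-t|-C\le d(f(s),f(t))\le K|s-t|+C$. *)

(* Defs.v *)
From Stdlib Require Import Reals.
Open Scope R_scope.

Record MetricSpace := {
  pt :> Type;
  mdist : pt -> pt -> R;
  mdist_nonneg : forall x y, 0 <= mdist x y;
  mdist_eq0 : forall x y, mdist x y = 0 <-> x = y;
  mdist_sym : forall x y, mdist x y = mdist y x;
  mdist_tri : forall x y z, mdist x z <= mdist x y + mdist y z
}.

Arguments mdist {m} _ _.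

Definition cont_on {X : MetricSpace} (I : R -> Prop) (f : R -> X) : Prop :=
  forall s, I s -> forall eps, 0 < eps -> exists delta, 0 < delta /\
    forall t, I t -> Rabs (t - s) < delta -> mdist (f s) (f t) < eps.

Definition is_interval (D : R -> Prop) : Prop :=
  forall s t u, D s -> D u -> s <= t <= u -> D t.

Definition geodesic {X : MetricSpace} (D : R -> Prop) (gamma : R -> X) : Prop :=
  is_interval D /\ (exists s, D s) /\
  forall s t, D s -> D t -> mdist (gamma s) (gamma t) = Rabs (s - t).

Definition quasi_geodesic {X : MetricSpace} (K C a b : R) (f : R -> X) : Prop :=
  a <= b /\ cont_on (fun s => a <= s <= b) f /\
  forall s t, a <= s <= b -> a <= t <= b ->
    / K * Rabs (s - t) - C <= mdist (f s) (f t) <= K * Rabs (s - t) + C.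

Definition geodesic_space (X : MetricSpace) : Prop :=
  forall x y : X, exists g : R -> X,
    geodesic (fun s => 0 <= s <= mdist x y) g /\ g 0 = x /\ g (mdist x y) = y.

Definition morse_gauge (N : R -> R -> R) : Prop :=
  forall K C, 1 <= K -> 0 <= C -> 0 <= N K C.

Definition morse {X : MetricSpace} (N : R -> R -> R) (D : R -> Prop) (gamma : R -> X) : Prop :=
  geodesic D gamma /\
  forall K C a b (q : R -> X), 1 <= K -> 0 <= C ->
    quasi_geodesic K C a b q ->
    (exists u, D u /\ q a = gamma u) ->
    (exists u, D u /\ q b = gamma u) ->
    forall s, a <= s <= b -> exists u, D u /\ mdist (q s) (gamma u) <= N K C.

(* The concatenated path P: l1 from y1 = l1(t1) back to x1 = l1(t0) (parameters
   s in [0, t1-t0]), then g from x1 to x2 (g defined on [0,L], L = d(x1,x2)),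
   then l2 from x2 = l2(t0) to y2 = l2(t2). *)
Definition concat_path {X : MetricSpace} (l1 g l2 : R -> X) (t0 t1 L : R) (s : R) : X :=
  if Rle_dec s (t1 - t0) then l1 (t1 - s)
  else if Rle_dec s (t1 - t0 + L) then g (s - (t1 - t0))
  else l2 (t0 + (s - (t1 - t0) - L)).

(* Main.v *)
Require Import Defs.
From Stdlib Require Import Reals Lra.
Open Scope R_scope.

Lemma geo_dist {X:MetricSpace} D (g:R->X) : geodesic D g ->
  forall s t, D s -> D t -> mdist (g s) (g t) = Rabs (s-t).
Proof. intros [_ [_ H]]; exact H. Qed.

Lemma geo_int {X:MetricSpace} D (g:R->X) : geodesic D g -> is_interval D.
Proof. intros [H _]; exact H. Qed.

Lemma lip_cont {X:MetricSpace} (I : R -> Prop) (f : R -> X) K : 0 < K ->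
  (forall s t, I s -> I t -> mdist (f s) (f t) <= K * Rabs (s-t)) -> cont_on I f.
Proof.
  intros HK H s Is eps He. exists (eps / K). split.
  - apply Rdiv_lt_0_compat; lra.
  - intros t It Ht. specialize (H s t Is It). rewrite Rabs_minus_sym in Ht.
    assert (K * Rabs (s - t) < K * (eps / K)) by (apply Rmult_lt_compat_l; lra).
    replace (K * (eps / K)) with eps in H0 by (field; lra). lra.
Qed.

Lemma proj_qg {X:MetricSpace} (sig rho : R -> X) (d r0 : R) (x : X) :
  0 <= r0 <= d ->
  (forall s t, 0 <= s <= d -> 0 <= t <= d -> mdist (sig s) (sig t) = Rabs (s-t)) ->
  (forall t, 0 <= t <= d -> mdist x (sig r0) <= mdist x (sig t)) ->
  (forall s t, 0 <= s <= mdist x (sig r0) -> 0 <= t <= mdist x (sig r0) ->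
     mdist (rho s) (rho t) = Rabs (s-t)) ->
  rho 0 = x -> rho (mdist x (sig r0)) = sig r0 ->
  quasi_geodesic 3 0 0 (mdist x (sig r0) + (d - r0))
    (fun s => if Rle_dec s (mdist x (sig r0)) then rho s else sig (r0 + (s - mdist x (sig r0)))).
Proof.
  intros Hr Hs Hm Hrho R0 Rh.
  set (h := mdist x (sig r0)) in *.
  assert (Hh : 0 <= h) by apply mdist_nonneg.
  set (Q := fun s => if Rle_dec s h then rho s else sig (r0 + (s - h))).
  assert (key : forall s t, 0 <= s <= h + (d - r0) -> 0 <= t <= h + (d - r0) -> s <= t ->
     t - s <= 3 * mdist (Q s) (Q t) /\ mdist (Q s) (Q t) <= t - s).
  { intros s t Hs1 Ht1 st. unfold Q.
    destruct (Rle_dec s h), (Rle_dec t h).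
    - rewrite Hrho by lra. split_Rabs; lra.
    - pose proof (Hrho s h ltac:(lra) ltac:(lra)) as A1.
      pose proof (Hrho 0 s ltac:(lra) ltac:(lra)) as A2.
      pose proof (Hs r0 (r0 + (t - h)) ltac:(lra) ltac:(lra)) as A3.
      pose proof (Hm (r0 + (t - h)) ltac:(lra)) as A4.
      rewrite Rh in A1. rewrite R0 in A2.
      pose proof (mdist_tri _ (sig r0) (rho s) (sig (r0 + (t - h)))).
      pose proof (mdist_tri _ (rho s) (sig r0) (sig (r0 + (t - h)))).
      pose proof (mdist_tri _ x (rho s) (sig (r0 + (t - h)))).
      pose proof (mdist_sym _ (sig r0) (rho s)).
      split_Rabs; lra.
    - lra.
    - rewrite Hs by lra. split_Rabs; lra. }
  assert (key2 : forall s t, 0 <= s <= h + (d - r0) -> 0 <= t <= h + (d - r0) ->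
     Rabs (s - t) <= 3 * mdist (Q s) (Q t) /\ mdist (Q s) (Q t) <= Rabs (s - t)).
  { intros s t Hs1 Ht1. destruct (Rle_dec s t).
    - destruct (key s t) as [k1 k2]; auto. split_Rabs; lra.
    - destruct (key t s) as [k1 k2]; auto; try lra. rewrite mdist_sym. split_Rabs; lra. }
  split; [lra|]. split.
  - apply (lip_cont _ _ 1); [lra|]. intros s t Hs1 Ht1. destruct (key2 s t Hs1 Ht1). lra.
  - intros s t Hs1 Ht1. destruct (key2 s t Hs1 Ht1). split; lra.
Qed.
Lemma near_morse {X:MetricSpace} N D (l : R -> X) (sig : R -> X) d r0 x u0 u1 :
  geodesic_space X -> morse N D l ->
  0 <= r0 <= d ->
  (forall s t, 0 <= s <= d -> 0 <= t <= d -> mdist (sig s) (sig t) = Rabs (s-t)) ->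
  (forall t, 0 <= t <= d -> mdist x (sig r0) <= mdist x (sig t)) ->
  D u0 -> l u0 = x -> D u1 -> l u1 = sig d ->
  exists u, D u /\ mdist (sig r0) (l u) <= N 3 0.
Proof.
  intros GS [_ M] Hr Hsig Hmin D0 E0 D1 E1.
  destruct (GS x (sig r0)) as [rho [Grho [R0 Rh]]].
  pose proof (proj_qg sig rho d r0 x Hr Hsig Hmin (geo_dist _ _ Grho) R0 Rh) as Q.
  set (h := mdist x (sig r0)) in *.
  assert (0 <= h) by apply mdist_nonneg.
  assert (Ea : exists u, D u /\ (fun s => if Rle_dec s h then rho s else sig (r0 + (s - h))) 0 = l u).
  { exists u0; split; auto. simpl. destruct (Rle_dec 0 h); [rewrite R0; auto | lra]. }
  assert (Eb : exists u, D u /\ (fun s => if Rle_dec s h then rho s else sig (r0 + (s - h))) (h + (d - r0)) = l u).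
  { exists u1; split; auto. simpl. rewrite E1. destruct (Rle_dec (h + (d-r0)) h).
    + replace (h + (d-r0)) with h by lra. rewrite Rh. f_equal. lra.
    + f_equal. lra. }
  destruct (M 3 0 0 (h + (d - r0)) _ ltac:(lra) ltac:(lra) Q Ea Eb h ltac:(lra)) as [u [Du Hu]].
  exists u. split; auto. simpl in Hu. destruct (Rle_dec h h); [rewrite Rh in Hu; auto| lra].
Qed.

Lemma clamp_lip d s t : 0 <= d ->
  Rabs (Rmax 0 (Rmin d s) - Rmax 0 (Rmin d t)) <= Rabs (s - t) /\ 0 <= Rmax 0 (Rmin d s) <= d.
Proof.
  intros Hd. unfold Rmax, Rmin.
  repeat match goal with |- context[Rle_dec ?a ?b] => destruct (Rle_dec a b) | H : context[Rle_dec ?a ?b] |- _ => destruct (Rle_dec a b) end;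
  repeat match goal with H: ~ _ <= _ |- _ => apply Rnot_le_lt in H end;
  split_Rabs; lra.
Qed.

Lemma clamp_id d s : 0 <= s <= d -> Rmax 0 (Rmin d s) = s.
Proof.
  intros Hs. unfold Rmax, Rmin.
  repeat match goal with |- context[Rle_dec ?a ?b] => destruct (Rle_dec a b) | H : context[Rle_dec ?a ?b] |- _ => destruct (Rle_dec a b) end;
  repeat match goal with H: ~ _ <= _ |- _ => apply Rnot_le_lt in H end; lra.
Qed.

Lemma exists_min {X:MetricSpace} (gam : R -> X) d (x : X) : 0 <= d ->
  (forall s t, 0 <= s <= d -> 0 <= t <= d -> mdist (gam s) (gam t) = Rabs (s-t)) ->
  exists r0, 0 <= r0 <= d /\ forall t, 0 <= t <= d -> mdist x (gam r0) <= mdist x (gam t).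
Proof.
  intros Hd Hg.
  set (f := fun s => mdist x (gam (Rmax 0 (Rmin d s)))).
  assert (Lf : forall s t, Rabs (f s - f t) <= Rabs (s - t)).
  { intros s t. unfold f.
    destruct (clamp_lip d s t Hd) as [c1 c2]. destruct (clamp_lip d t s Hd) as [_ c3].
    pose proof (Hg _ _ c2 c3).
    pose proof (mdist_tri _ x (gam (Rmax 0 (Rmin d s))) (gam (Rmax 0 (Rmin d t)))).
    pose proof (mdist_tri _ x (gam (Rmax 0 (Rmin d t))) (gam (Rmax 0 (Rmin d s)))).
    pose proof (mdist_sym _ (gam (Rmax 0 (Rmin d s))) (gam (Rmax 0 (Rmin d t)))).
    split_Rabs; lra. }
  destruct (continuity_ab_min f 0 d Hd) as [r0 [H1 H2]].
  { intros c _. unfold continuity_pt, continue_in, limit1_in, limit_in.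
    intros eps He. exists eps. split; auto. intros y [_ Hy]. simpl in *.
    unfold R_dist in *. pose proof (Lf y c). lra. }
  exists r0. split; auto. intros t Ht. specialize (H1 t Ht). unfold f in H1.
  rewrite !clamp_id in H1 by lra. auto.
Qed.
Lemma gromov {X:MetricSpace} N D1 D2 (l1 l2: R->X) e t0 a b :
  geodesic_space X -> morse N D1 l1 -> morse N D2 l2 ->
  D1 0 -> D2 0 -> (forall t, D1 t -> 0 <= t) -> (forall t, D2 t -> 0 <= t) ->
  l1 0 = e -> l2 0 = e ->
  (forall t, t0 <= t -> D1 t -> D2 t -> mdist (l1 t) (l2 t) > 4 * N 3 0) ->
  D1 a -> D2 b ->
  mdist (l1 a) (l2 b) > a + b - 2 * t0 - 4 * N 3 0.
Proof.
  intros GS M1 M2 D10 D20 P1 P2 E1 E2 H Da Db.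
  pose proof (geo_dist _ _ (proj1 M1)) as G1.
  pose proof (geo_dist _ _ (proj1 M2)) as G2.
  pose proof (geo_int _ _ (proj1 M1)) as I1.
  pose proof (geo_int _ _ (proj1 M2)) as I2.
  destruct (GS (l1 a) (l2 b)) as [gam [Gg [g0 gd]]].
  set (d := mdist (l1 a) (l2 b)) in *.
  assert (Hd : 0 <= d) by apply mdist_nonneg.
  pose proof (geo_dist _ _ Gg) as Hg. simpl in Hg.
  destruct (exists_min gam d e Hd Hg) as [r0 [Hr Hmin]].
  destruct (near_morse N D1 l1 (fun t => gam (d - t)) d (d - r0) e 0 a GS M1) as [u [Du Hu]];
    auto; try lra.
  { intros s t Hs Ht. rewrite Hg by lra. split_Rabs; lra. }
  { intros t Ht. replace (d - (d - r0)) with r0 by ring. apply Hmin. lra. }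
  { replace (d - d) with 0 by ring. auto. }
  replace (d - (d - r0)) with r0 in Hu by ring.
  destruct (near_morse N D2 l2 gam d r0 e 0 b GS M2) as [v [Dv Hv]]; auto.
  set (z := gam r0) in *.
  set (n := N 3 0) in *.
  pose proof (P1 u Du). pose proof (P2 v Dv). pose proof (P1 a Da). pose proof (P2 b Db).
  assert (A1 : mdist (l1 a) z = r0). { unfold z. rewrite <- g0, Hg by lra. split_Rabs; lra. }
  assert (A2 : mdist z (l2 b) = d - r0). { unfold z. rewrite <- gd, Hg by lra. split_Rabs; lra. }
  pose proof (G1 a u Da Du) as A3. pose proof (G2 b v Db Dv) as A4.
  pose proof (G1 0 u D10 Du) as A5. pose proof (G2 0 v D20 Dv) as A6.
  rewrite E1 in A5. rewrite E2 in A6.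
  pose proof (mdist_tri _ (l1 a) z (l1 u)).
  pose proof (mdist_tri _ (l2 v) z (l2 b)).
  pose proof (mdist_sym _ (l2 v) z).
  pose proof (mdist_sym _ (l2 v) (l2 b)).
  pose proof (mdist_tri _ e (l2 v) (l1 u)).
  pose proof (mdist_tri _ e (l1 u) (l2 v)).
  pose proof (mdist_tri _ (l2 v) z (l1 u)).
  pose proof (mdist_sym _ (l2 v) (l1 u)).
  assert (B : u < t0 \/ v < t0).
  { destruct (Rle_dec u v).
    - left. destruct (Rlt_le_dec u t0) as [|Hu0]; auto. exfalso.
      assert (Du2 : D2 u) by (apply (I2 0 u v); auto; lra).
      pose proof (H u Hu0 Du Du2).
      pose proof (G2 v u Dv Du2).
      pose proof (mdist_tri _ (l1 u) z (l2 u)).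
      pose proof (mdist_tri _ z (l2 v) (l2 u)).
      pose proof (mdist_sym _ (l1 u) z).
      split_Rabs; lra.
    - right. destruct (Rlt_le_dec v t0) as [|Hv0]; auto. exfalso.
      assert (Dv1 : D1 v) by (apply (I1 0 v u); auto; lra).
      pose proof (H v Hv0 Dv1 Dv).
      pose proof (G1 v u Dv1 Du).
      pose proof (mdist_tri _ (l1 v) (l1 u) (l2 v)).
      pose proof (mdist_tri _ (l1 u) z (l2 v)).
      pose proof (mdist_sym _ (l1 u) z).
      split_Rabs; lra. }
  split_Rabs; lra.
Qed.
Theorem lemma3p4 (X : MetricSpace) (N : R -> R -> R)
  (D1 D2 : R -> Prop) (l1 l2 : R -> X) (e : X) (t0 t1 t2 : R) (g : R -> X) :
  geodesic_space X ->
  morse_gauge N ->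
  morse N D1 l1 -> morse N D2 l2 ->
  D1 0 -> D2 0 -> (forall t, D1 t -> 0 <= t) -> (forall t, D2 t -> 0 <= t) ->
  l1 0 = e -> l2 0 = e ->
  D1 t0 -> D2 t0 ->
  (forall t, t0 <= t -> D1 t -> D2 t -> mdist (l1 t) (l2 t) > 4 * N 3 0) ->
  mdist (l1 t0) (l2 t0) <= 6 * N 3 0 ->
  D1 t1 -> t0 <= t1 -> D2 t2 -> t0 <= t2 ->
  geodesic (fun s => 0 <= s <= mdist (l1 t0) (l2 t0)) g ->
  g 0 = l1 t0 -> g (mdist (l1 t0) (l2 t0)) = l2 t0 ->
  quasi_geodesic 1 (12 * N 3 0) 0 ((t1 - t0) + mdist (l1 t0) (l2 t0) + (t2 - t0))
    (concat_path l1 g l2 t0 t1 (mdist (l1 t0) (l2 t0)))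
  /\ mdist (l1 t1) (l2 t2) >=
       mdist (l1 t1) (l1 t0) + mdist (l1 t0) (l2 t0) + mdist (l2 t0) (l2 t2) - 12 * N 3 0.
Proof.
  intros GS MG M1 M2 D10 D20 P1 P2 E1 E2 D1t0 D2t0 H HL D1t1 Ht1 D2t2 Ht2 Gg g0 gL.
  pose proof (geo_dist _ _ (proj1 M1)) as G1.
  pose proof (geo_dist _ _ (proj1 M2)) as G2.
  pose proof (geo_int _ _ (proj1 M1)) as I1.
  pose proof (geo_int _ _ (proj1 M2)) as I2.
  pose proof (geo_dist _ _ Gg) as Gd. simpl in Gd.
  assert (Hn : 0 <= N 3 0) by (apply MG; lra).
  pose proof (gromov N D1 D2 l1 l2 e t0 t1 t2 GS M1 M2 D10 D20 P1 P2 E1 E2 H D1t1 D2t2) as GR.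
  set (L := mdist (l1 t0) (l2 t0)) in *.
  set (n := N 3 0) in *.
  assert (HL0 : 0 <= L) by apply mdist_nonneg.
  assert (J1 : forall x, t0 <= x <= t1 -> D1 x) by (intros; apply (I1 t0 x t1); auto).
  assert (J2 : forall x, t0 <= x <= t2 -> D2 x) by (intros; apply (I2 t0 x t2); auto).
  split.
  2:{ rewrite (G1 t1 t0), (G2 t0 t2) by auto. split_Rabs; lra. }
  set (P := concat_path l1 g l2 t0 t1 L).
  set (A := t1 - t0).
  set (T := A + L + (t2 - t0)).
  assert (key : forall s t, 0 <= s <= T -> 0 <= t <= T -> s <= t ->
     t - s - 12 * n <= mdist (P s) (P t) <= t - s).
  { intros s t Hs Ht st. unfold P, concat_path. fold A.
    unfold T in Hs, Ht.
    destruct (Rle_dec s A) as [a1|a1]; [|apply Rnot_le_lt in a1];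
    destruct (Rle_dec t A) as [b1|b1]; [|apply Rnot_le_lt in b1| |apply Rnot_le_lt in b1].
    - rewrite G1 by (apply J1; unfold A in *; lra). split_Rabs; lra.
    - destruct (Rle_dec t (A + L)) as [b2|b2]; [|apply Rnot_le_lt in b2].
      + pose proof (G1 (t1 - s) t0 ltac:(apply J1; unfold A in *; lra) D1t0) as F1.
        pose proof (Gd 0 (t - A) ltac:(lra) ltac:(lra)) as F2. rewrite g0 in F2.
        pose proof (mdist_tri _ (l1 (t1 - s)) (l1 t0) (g (t - A))) as F3.
        pose proof (mdist_tri _ (l1 (t1 - s)) (g (t - A)) (l1 t0)) as F4.
        pose proof (mdist_sym _ (l1 t0) (g (t - A))) as F6.
        pose proof (mdist_sym _ (l1 t0) (l1 (t1 - s))) as F5.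
        unfold A in *; split_Rabs; lra.
      + pose proof (gromov N D1 D2 l1 l2 e t0 (t1 - s) (t0 + (t - A - L)) GS M1 M2 D10 D20 P1 P2 E1 E2 H
                    ltac:(apply J1; unfold A in *; lra) ltac:(apply J2; unfold A in *; lra)) as F0.
        pose proof (G1 (t1 - s) t0 ltac:(apply J1; unfold A in *; lra) D1t0) as F1.
        pose proof (G2 t0 (t0 + (t - A - L)) D2t0 ltac:(apply J2; unfold A in *; lra)) as F2.
        pose proof (mdist_tri _ (l1 (t1 - s)) (l1 t0) (l2 (t0 + (t - A - L)))) as F3.
        pose proof (mdist_tri _ (l1 t0) (l2 t0) (l2 (t0 + (t - A - L)))) as F4.
        fold L in F4. fold n in F0. unfold A in *; split_Rabs; lra.
    - lra.
    - destruct (Rle_dec s (A + L)) as [a2|a2]; [|apply Rnot_le_lt in a2];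
      destruct (Rle_dec t (A + L)) as [b2|b2]; [|apply Rnot_le_lt in b2| |apply Rnot_le_lt in b2].
      + rewrite Gd by lra. split_Rabs; lra.
      + pose proof (Gd (s - A) L ltac:(lra) ltac:(lra)) as F1. rewrite gL in F1.
        pose proof (G2 t0 (t0 + (t - A - L)) D2t0 ltac:(apply J2; unfold A in *; lra)) as F2.
        pose proof (mdist_tri _ (g (s - A)) (l2 t0) (l2 (t0 + (t - A - L)))) as F3.
        pose proof (mdist_tri _ (l2 t0) (g (s - A)) (l2 (t0 + (t - A - L)))) as F4.
        pose proof (mdist_sym _ (l2 t0) (g (s - A))) as F6.
        pose proof (mdist_sym _ (l2 t0) (l2 (t0 + (t - A - L)))) as F5.
        split_Rabs; lra.
      + lra.
      + rewrite G2 by (apply J2; unfold A in *; lra). split_Rabs; lra. }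
  assert (key2 : forall s t, 0 <= s <= T -> 0 <= t <= T ->
     Rabs (s - t) - 12 * n <= mdist (P s) (P t) <= Rabs (s - t)).
  { intros s t Hs1 Hu1. destruct (Rle_dec s t).
    - destruct (key s t) as [k1 k2]; auto. split_Rabs; lra.
    - destruct (key t s) as [k1 k2]; auto; try lra. rewrite mdist_sym. split_Rabs; lra. }
  split; [unfold T, A in *; lra|]. split.
  - apply (lip_cont _ _ 1); [lra|]. intros s t Hs1 Hu1. destruct (key2 s t Hs1 Hu1). lra.
  - intros s t Hs1 Hu1. destruct (key2 s t Hs1 Hu1). split; lra.
Qed.
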